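(* Let $1<\alpha\le2$, $\delta\in(1-\frac\alpha2,1)$, and let $f(x)=a_0+a_1x+\dots+a_nx^n$ be a real polynomial. Then $F:C^\delta(0,1)\to H^{-\alpha/2}_2$, $F(u)=\frac{d}{dx}f(u(\cdot))$, is well defined, and for every $R>0$ there is $C_R>0$ such that for all $u,v\in C^\delta(0,1)$ with $|u|_{C^\delta},|v|_{C^\delta}\le R$, $$|F(u)-F(v)|_{H^{-\alpha/2}_2}\le C_R\,|u-v|_{C^\delta}.$$
   Context: Let $e_k(x)=\sqrt2\sin(k\pi x)$, $k\ge1$, be the $L^2(0,1)$-orthonormal eigenfunctions of $A=-\partial_x^2$ with Dirichlet boundary conditions on $(0,1)$, with eigenvalues $\lambda_k=(k\pi)^2$. For $\gamma\in\mathbb R$, $H^\gamma_2$ is the space of $v=\sum_k v_ke_k$ with $|v|^2_{H^\gamma_2}=\sum_k\lambda_k^\gamma v_k^2<\infty$ (for $\gamma<0$ the completion of $L^2(0,1)$ in this norm). For $\delta\in(0,1)$, $C^\delta(0,1)$ is the space of bounded continuous functions on $[0,1]$ with norm $|g|_{C^\delta}=\sup_x|g(x)|+\sup_{x\ne y}|g(x)-g(y)|/|x-y|^\delta$. For $u\in C^\delta(0,1)$, $F(u)=\partial_x(f(u))$ is the distribution with coefficients $\langle F(u),e_k\rangle:=-\int_0^1 f(u(x))e_k'(x)\,dx$. *)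

(* Defs.v *)
From Stdlib Require Import Reals Lra Classical ClassicalEpsilon.
Open Scope R_scope.

(* Derivative of e_k(x) = sqrt 2 * sin (k pi x). *)
Definition ek' (k : nat) (x : R) : R :=
  sqrt 2 * (INR k * PI) * cos (INR k * PI * x).

Definition lam (k : nat) : R := (INR k * PI) ^ 2.

Definition polyR (a : nat -> R) (n : nat) (x : R) : R :=
  sum_f_R0 (fun i => a i * x ^ i) n.

(* Total Riemann integral over [a,b]: the Riemann integral when it exists,
   0 otherwise (integrability is asserted separately in the theorem). *)
Definition Rint (g : R -> R) (a b : R) : R :=
  match excluded_middle_informative (exists pr : Riemann_integrable g a b, True) with
  | left H => let (pr, _) := constructive_indefinite_description _ H in RiemannInt pr
  | right _ => 0
  end.

(* <F(u), e_k> := - \int_0^1 f(u(x)) e_k'(x) dx, f = polyR a n. *)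
Definition Fcoef (a : nat -> R) (n : nat) (u : R -> R) (k : nat) : R :=
  - Rint (fun x => polyR a n (u x) * ek' k x) 0 1.

(* A bounds sup_{[0,1]} |u| and B bounds the delta-Hoelder seminorm on [0,1].
   |u|_{C^delta} <= R  iff  exists such A B with A + B <= R  (sup = least bound),
   and  X <= C |u|_{C^delta}  iff  X <= C (A+B) for all such A B (C >= 0). *)
Definition holder_bounds (delta : R) (u : R -> R) (A B : R) : Prop :=
  (forall x, 0 <= x <= 1 -> Rabs (u x) <= A) /\
  (forall x y, 0 <= x <= 1 -> 0 <= y <= 1 -> x <> y ->
     Rabs (u x - u y) <= B * Rpower (Rabs (x - y)) delta).

Definition in_Cdelta (delta : R) (u : R -> R) : Prop :=
  exists A B, holder_bounds delta u A B.

(* Summand of |w|^2_{H^gamma_2} = sum_{k>=1} lambda_k^gamma w_k^2, index m <-> k = m+1. *)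
Definition Hterm (gamma : R) (w : nat -> R) (m : nat) : R :=
  Rpower (lam (S m)) gamma * (w (S m)) ^ 2.

(* Main.v *)
Require Import Defs.
From Stdlib Require Import Reals Lra Lia Psatz Classical ClassicalEpsilon FunctionalExtensionality.
From Coquelicot Require Import Coquelicot.
Open Scope R_scope.


Definition hol (d K : R) (g : R -> R) :=
  forall x y, Rabs (g x - g y) <= K * Rpower (Rabs (x - y)) d.

Lemma Rpower_pos x y : 0 < Rpower x y.
Proof. unfold Rpower; apply exp_pos. Qed.

Lemma Rpower_1l y : Rpower 1 y = 1.
Proof. unfold Rpower; rewrite ln_1, Rmult_0_r; apply exp_0. Qed.

Lemma hol_cont d K g : 0 < d -> 0 <= K -> hol d K g -> forall x, continuous g x.
Proof.
  intros Hd HK Hg x. apply continuity_pt_filterlim.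
  unfold continuity_pt, continue_in, limit1_in, limit_in; simpl; unfold R_dist.
  intros eps Heps.
  exists (Rpower (eps / (K+1)) (/ d)). split; [apply Rpower_pos|].
  intros y [_ Hy].
  destruct (Req_dec y x) as [->|Hne].
  { unfold Rminus; rewrite Rplus_opp_r, Rabs_R0; lra. }
  eapply Rle_lt_trans; [apply Hg|].
  assert (Hp : Rpower (Rabs (y - x)) d < eps / (K+1)).
  { replace (eps/(K+1)) with (Rpower (Rpower (eps / (K+1)) (/ d)) d).
    2:{ rewrite Rpower_mult, Rinv_l by lra. apply Rpower_1.
        apply Rdiv_lt_0_compat; lra. }
    apply Rlt_Rpower_l; auto. split; auto. apply Rabs_pos_lt. lra. }
  assert (K * (eps / (K+1)) < eps).
  { unfold Rdiv. rewrite <- Rmult_assoc.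
    apply Rmult_lt_reg_r with (K+1); [lra|].
    rewrite Rmult_assoc, Rinv_l by lra. nra. }
  assert (K * Rpower (Rabs (y - x)) d <= K * (eps / (K+1))).
  { apply Rmult_le_compat_l; lra. }
  lra.
Qed.

Lemma cM (f g : R -> R) (x : R) : continuous f x -> continuous g x -> continuous (fun y => f y * g y) x.
Proof. intros; apply (continuous_mult f g); auto. Qed.
Lemma cP (f g : R -> R) (x : R) : continuous f x -> continuous g x -> continuous (fun y => f y + g y) x.
Proof. intros; apply (continuous_plus f g); auto. Qed.
Lemma cO (f : R -> R) (x : R) : continuous f x -> continuous (fun y => - f y) x.
Proof. intros; apply (continuous_opp f); auto. Qed.
Lemma cMi (f g : R -> R) (x : R) : continuous f x -> continuous g x -> continuous (fun y => f y - g y) x.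
Proof. intros; apply cP; auto; apply cO; auto. Qed.
Lemma cC (c : R) (x : R) : continuous (fun _ => c) x.
Proof. apply continuous_const. Qed.
Lemma cI (x : R) : continuous (fun y : R => y) x.
Proof. apply continuous_id. Qed.
Lemma cCos (f : R -> R) (x : R) : continuous f x -> continuous (fun y => cos (f y)) x.
Proof. intros H; apply (continuous_comp f cos x H).
  apply (ex_derive_continuous (K := R_AbsRing) (V := R_NormedModule) cos). auto_derive. auto. Qed.
Lemma cPow (f : R -> R) n (x : R) : continuous f x -> continuous (fun y => f y ^ n) x.
Proof. intros H; induction n; simpl.
  apply cC. apply cM; auto. Qed.

Ltac hypc := match goal with H : forall x, continuous _ x |- _ => apply H end.
Ltac cont1 := match goal with
 | |- continuous (fun _ => ?c) _ => apply (cC c)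
 | |- continuous (fun y => y) _ => apply cI
 | |- continuous (fun y => @?f y + @?g y) _ => apply (cP f g)
 | |- continuous (fun y => @?f y - @?g y) _ => apply (cMi f g)
 | |- continuous (fun y => @?f y * @?g y) _ => apply (cM f g)
 | |- continuous (fun y => - @?f y) _ => apply (cO f)
 | |- continuous (fun y => cos (@?f y)) _ => apply (cCos f)
 | |- continuous (fun y => (@?f y) ^ ?n) _ => apply (cPow f n)
 | _ => hypc
 end.
Ltac cont := repeat cont1.

Lemma exR (f : R -> R) a b : (forall x, continuous f x) -> ex_RInt f a b.
Proof. intros; apply (ex_RInt_continuous (V := R_CompleteNormedModule) f); auto. Qed.

Lemma RInt_plusR (f g : R -> R) a b : (forall x, continuous f x) -> (forall x, continuous g x) ->
  RInt (fun x => f x + g x) a b = RInt f a b + RInt g a b.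
Proof. intros; apply (RInt_plus f g); apply exR; auto. Qed.
Lemma RInt_scalR (f : R -> R) c a b : (forall x, continuous f x) ->
  RInt (fun x => c * f x) a b = c * RInt f a b.
Proof. intros; apply (RInt_scal f); apply exR; auto. Qed.
Lemma RInt_minusR (f g : R -> R) a b : (forall x, continuous f x) -> (forall x, continuous g x) ->
  RInt (fun x => f x - g x) a b = RInt f a b - RInt g a b.
Proof. intros; apply (RInt_minus f g); apply exR; auto. Qed.
Lemma RInt_swapR (f : R -> R) a b : (forall x, continuous f x) -> RInt f b a = - RInt f a b.
Proof. intros; rewrite <- (opp_RInt_swap f a b); auto. apply exR; auto. Qed.
Lemma RInt_ChaslesR (f : R -> R) a b c : (forall x, continuous f x) ->
  RInt f a b + RInt f b c = RInt f a c.
Proof. intros; apply (RInt_Chasles f); apply exR; auto. Qed.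
Lemma RInt_constR (c : R) a b : RInt (fun _ => c) a b = (b - a) * c.
Proof. rewrite RInt_const. reflexivity. Qed.

Lemma shiftR (f : R -> R) v a b : (forall x, continuous f x) ->
  RInt (fun x => f (x + v)) a b = RInt f (a + v) (b + v).
Proof. intros Hf.
  generalize (RInt_comp_lin f 1 v a b (exR _ _ _ Hf)).
  replace (1 * a + v) with (a + v) by ring. replace (1*b+v) with (b+v) by ring.
  intros <-. apply RInt_ext. intros x _. unfold scal; simpl; unfold mult; simpl. rewrite Rmult_1_l. f_equal. ring.
Qed.
Lemma opp_m1 (I : R) : - (-1 * I) = I. Proof. ring. Qed.
Lemma reflR (f : R -> R) c a b : (forall x, continuous f x) ->
  RInt (fun x => f (c - x)) a b = RInt f (c - b) (c - a).
Proof. intros Hf.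
  generalize (RInt_comp_lin f (-1) c a b (exR _ _ _ Hf)). intros H.
  rewrite (RInt_swapR f (c-a) (c-b)) by auto.
  replace (c - a) with (-1 * a + c) by ring. replace (c - b) with (-1*b+c) by ring.
  rewrite <- H.
  transitivity (- RInt (fun y => -1 * f (-1 * y + c)) a b).
  - rewrite (RInt_scalR (fun y => f (-1 * y + c)) (-1)) by
      (intros x; apply (continuous_comp (fun y => -1*y+c) f); [cont | apply Hf]).
    rewrite opp_m1.
    apply RInt_ext. intros x _. f_equal. ring.
  - reflexivity.
Qed.


Definition cs (k : nat) (x : R) := cos (INR k * PI * x).

Lemma cs_cont k x : continuous (cs k) x.
Proof. unfold cs; cont. Qed.

Lemma sin_nPI m : sin (INR m * PI) = 0.
Proof. apply sin_eq_0_1. exists (Z.of_nat m). rewrite INR_IZR_INZ. auto. Qed.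

Lemma int_cos m : m <> 0%nat -> RInt (cs m) 0 1 = 0.
Proof.
  intros Hm. assert (Hm' : INR m <> 0) by (apply not_0_INR; auto).
  assert (HP := PI_RGT_0).
  apply is_RInt_unique.
  assert (E : minus (sin (INR m * PI * 1) / (INR m * PI)) (sin (INR m * PI * 0) / (INR m * PI)) = 0).
  { rewrite Rmult_1_r, Rmult_0_r, sin_0, sin_nPI. unfold minus, plus, opp; simpl. field. split; lra. }
  rewrite <- E at 2.
  apply (is_RInt_derive (V := R_CompleteNormedModule) (fun x => sin (INR m * PI * x) / (INR m * PI))).
  + intros x _. auto_derive; auto. unfold cs. field. split; lra.
  + intros x _. apply cs_cont.
Qed.

Lemma int_cos0 : RInt (cs 0) 0 1 = 1.
Proof. rewrite (RInt_ext (cs 0) (fun _ => 1) 0 1).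
  - rewrite RInt_constR, Rmult_1_r. apply Rminus_0_r.
  - intros x _; unfold cs; simpl. rewrite !Rmult_0_l; apply cos_0. Qed.

Lemma cs_prod j k x : cs j x * cs k x =
  /2 * cs (j + k) x + /2 * (if Compare_dec.le_dec j k then cs (k - j) x else cs (j - k) x).
Proof.
  unfold cs. rewrite plus_INR.
  replace ((INR j + INR k) * PI * x) with (INR j * PI * x + INR k * PI * x) by ring.
  rewrite cos_plus.
  destruct (Compare_dec.le_dec j k).
  - rewrite minus_INR by auto.
    replace ((INR k - INR j) * PI * x) with (INR k * PI * x - INR j * PI * x) by ring.
    rewrite cos_minus. field.
  - rewrite minus_INR by lia.
    replace ((INR j - INR k) * PI * x) with (INR j * PI * x - INR k * PI * x) by ring.
    rewrite cos_minus. field.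
Qed.

Lemma eqR (a b : R) : a = b -> a = b. Proof. auto. Qed.

Ltac cont2 := repeat (match goal with |- continuous (cs _) _ => apply cs_cont | |- continuous (fun y => cs _ y) _ => apply cs_cont | _ => cont1 end).

Lemma lin2 (f g : R -> R) a b : (forall x, continuous f x) -> (forall x, continuous g x) ->
  RInt (fun x => a * f x + b * g x) 0 1 = a * RInt f 0 1 + b * RInt g 0 1.
Proof. intros. rewrite RInt_plusR by (intros; cont).
  rewrite (RInt_scalR f), (RInt_scalR g); auto. Qed.

Lemma orth j k : (1 <= j)%nat -> (1 <= k)%nat ->
  RInt (fun x => cs j x * cs k x) 0 1 = if Nat.eq_dec j k then /2 else 0.
Proof.
  intros Hj Hk. rewrite (RInt_ext _ _ 0 1 (fun x _ => cs_prod j k x)).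
  destruct (Compare_dec.le_dec j k) as [Hle|Hle].
  - rewrite (lin2 (cs (j+k)) (cs (k-j))) by apply cs_cont.
    rewrite (int_cos (j+k)) by lia.
    destruct (Nat.eq_dec j k) as [<-|Hne].
    + rewrite Nat.sub_diag, int_cos0. apply eqR; field.
    + rewrite int_cos by lia; apply eqR; ring.
  - rewrite (lin2 (cs (j+k)) (cs (j-k))) by apply cs_cont.
    rewrite (int_cos (j+k)) by lia.
    destruct (Nat.eq_dec j k) as [<-|Hne]; [lia|].
    rewrite int_cos by lia; apply eqR; ring.
Qed.




Ltac gen_ints := repeat match goal with |- context [RInt ?f ?a ?b] =>
   let I := fresh "I" in generalize (RInt f a b : R); intro I end.
Ltac rg := gen_ints; try apply eqR; ring.
Ltac fg := gen_ints; try apply eqR; field.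

Fixpoint fs (F : nat -> R) (n : nat) : R :=
  match n with O => 0 | S n => fs F n + F n end.

Definition bc (w : R -> R) (i : nat) := RInt (fun x => w x * cs (S i) x) 0 1.
Definition Pp (w : R -> R) (n : nat) (x : R) := fs (fun i => 2 * bc w i * cs (S i) x) n.

Lemma Pp_S (w : R -> R) (n : nat) (x : R) : Pp w (S n) x = Pp w n x + 2 * bc w n * cs (S n) x.
Proof. reflexivity. Qed.

Lemma Pp_cont (w : R -> R) (n : nat) (x : R) : continuous (Pp w n) x.
Proof.
  induction n.
  - unfold Pp; simpl. apply cC.
  - apply (continuous_ext (fun x => Pp w n x + 2 * bc w n * cs (S n) x)).
    + intros; rewrite Pp_S; auto.
    + apply cP; auto. apply cM; [apply cC| apply cs_cont].
Qed.

Ltac cont3 := repeat (match goal with |- continuous (cs _) _ => apply cs_cont | |- continuous (fun y => cs _ y) _ => apply cs_cont | |- continuous (Pp _ _) _ => apply Pp_cont | |- continuous (fun y => Pp _ _ y) _ => apply Pp_cont | _ => cont1 end).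

Lemma Pp_orth (w : R -> R) (n : nat) (m : nat) : (forall x, continuous w x) -> (n <= m)%nat ->
  RInt (fun x => Pp w n x * cs (S m) x) 0 1 = 0.
Proof.
  intros Hw. induction n; intros Hnm.
  - rewrite (RInt_ext _ (fun _ => 0)). rewrite RInt_constR. rg.
    intros; unfold Pp; simpl; rg.
  - rewrite (RInt_ext _ (fun x => Pp w n x * cs (S m) x + 2 * bc w n * (cs (S n) x * cs (S m) x))).
    2:{ intros; rewrite Pp_S; rg. }
    rewrite (RInt_plusR (fun x => Pp w n x * cs (S m) x) (fun x => 2 * bc w n * (cs (S n) x * cs (S m) x))) by (intros; cont3).
    rewrite (RInt_scalR (fun x => cs (S n) x * cs (S m) x)) by (intros; cont3).
    rewrite IHn by lia. rewrite orth by lia.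
    destruct (Nat.eq_dec (S n) (S m)); [lia|]. rg.
Qed.

Lemma lin4 (f1 f2 f3 f4 : R -> R) a b c : (forall x, continuous f1 x) -> (forall x, continuous f2 x) ->
  (forall x, continuous f3 x) -> (forall x, continuous f4 x) ->
  RInt (fun x => f1 x + a * f2 x + b * f3 x + c * f4 x) 0 1 =
  RInt f1 0 1 + a * RInt f2 0 1 + b * RInt f3 0 1 + c * RInt f4 0 1.
Proof. intros.
  rewrite (RInt_plusR (fun x => f1 x + a * f2 x + b * f3 x) (fun x => c * f4 x)) by (intros; cont).
  rewrite (RInt_plusR (fun x => f1 x + a * f2 x) (fun x => b * f3 x)) by (intros; cont).
  rewrite (RInt_plusR f1 (fun x => a * f2 x)) by (intros; cont).
  rewrite (RInt_scalR f2), (RInt_scalR f3), (RInt_scalR f4); auto. Qed.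

Lemma Pp_E (w : R -> R) (n : nat) : (forall x, continuous w x) ->
  RInt (fun x => (w x - Pp w n x) ^ 2) 0 1 = RInt (fun x => w x ^ 2) 0 1 - 2 * fs (fun i => bc w i ^ 2) n.
Proof.
  intros Hw. induction n.
  - rewrite (RInt_ext _ (fun x => w x ^ 2)). simpl; rg.
    intros; unfold Pp; simpl; rg.
  - rewrite (RInt_ext _ (fun x => (((w x - Pp w n x) ^ 2 + (- 4 * bc w n) * (w x * cs (S n) x))
       + (4 * bc w n) * (Pp w n x * cs (S n) x)) + (4 * bc w n ^ 2) * (cs (S n) x * cs (S n) x))).
    2:{ intros; rewrite Pp_S; rg. }
    assert (HP := Pp_cont w n).
    rewrite (lin4 (fun x => (w x - Pp w n x) ^ 2) (fun x => w x * cs (S n) x) (fun x => Pp w n x * cs (S n) x)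
       (fun x => cs (S n) x * cs (S n) x)) by (intros; cont3).
    rewrite IHn, Pp_orth, orth by (auto; lia).
    destruct (Nat.eq_dec (S n) (S n)); [|lia].
    fold (bc w n). simpl. fg.
Qed.

Lemma bessel (w : R -> R) (n : nat) : (forall x, continuous w x) ->
  fs (fun i => bc w i ^ 2) n <= / 2 * RInt (fun x => w x ^ 2) 0 1.
Proof.
  intros Hw. assert (H := Pp_E w n Hw).
  assert (0 <= RInt (fun x => (w x - Pp w n x) ^ 2) 0 1).
  { apply RInt_ge_0. lra. apply exR. intros; assert (HP := Pp_cont w n); cont3.
    intros; apply pow2_ge_0. }
  lra.
Qed.



Lemma shift_id (G : R -> R) (k : nat) (h : R) :
  (forall x, continuous G x) -> (forall z, G (- z) = G z) ->
  (forall z, 0 < z < 1 -> G (2 - z) = G z) -> 0 < h < 1 ->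
  RInt (fun x => (G (x + h) + G (x - h)) * cs k x) 0 1 =
  2 * cos (INR k * PI * h) * RInt (fun x => G x * cs k x) 0 1.
Proof.
  intros Gc Gs1 Gs2 Hh.
  set (c := INR k * PI).
  set (F1 := fun y => G y * cos (c * (y - h))).
  set (F2 := fun y => G y * cos (c * (y + h))).
  assert (C1 : forall x, continuous F1 x) by (intros; unfold F1; cont).
  assert (C2 : forall x, continuous F2 x) by (intros; unfold F2; cont).
  assert (E1 : RInt (fun x => (G (x + h) + G (x - h)) * cs k x) 0 1 =
     RInt (fun x => F1 (x + h)) 0 1 + RInt (fun x => F2 (x + - h)) 0 1).
  { rewrite <- (RInt_plusR (fun x => F1 (x + h)) (fun x => F2 (x + - h))).
    - apply RInt_ext. intros x _. unfold F1, F2, cs, c.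
      replace (x + h - h) with x by ring. replace (x + - h + h) with x by ring.
      replace (x + - h) with (x - h) by ring. rg.
    - intros x; apply (continuous_comp (fun y => y + h) F1). cont. apply C1.
    - intros x; apply (continuous_comp (fun y => y + - h) F2). cont. apply C2. }
  rewrite E1, !shiftR by auto.
  rewrite !Rplus_0_l.
  rewrite <- (RInt_ChaslesR F1 h 1 (1 + h)) by auto.
  rewrite <- (RInt_ChaslesR F2 (- h) 0 (1 + - h)) by auto.
  assert (E2 : RInt F1 1 (1 + h) = RInt F2 (1 - h) 1).
  { replace 1 with (2 - 1) at 1 by ring. replace (1 + h) with (2 - (1 - h)) by ring.
    rewrite <- (reflR F1 2 (1 - h) 1) by auto.
    apply RInt_ext. intros x Hx. rewrite Rmin_left in Hx by lra. rewrite Rmax_right in Hx by lra.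
    unfold F1, F2. rewrite Gs2 by lra. f_equal.
    replace (c * (2 - x - h)) with (- (c * (x + h)) + 2 * INR k * PI) by (unfold c; ring).
    rewrite cos_period, cos_neg. reflexivity. }
  assert (E3 : RInt F2 (- h) 0 = RInt F1 0 h).
  { replace (- h) with (0 - h) by ring. replace 0 with (0 - 0) at 2 by ring.
    rewrite <- (reflR F2 0 0 h) by auto.
    apply RInt_ext. intros x Hx.
    unfold F1, F2. replace (0 - x) with (- x) by ring. rewrite Gs1. f_equal.
    replace (c * (- x + h)) with (- (c * (x - h))) by ring. apply cos_neg. }
  rewrite E2, E3.
  replace (1 + - h) with (1 - h) by ring.
  assert (E4 : RInt F1 h 1 + RInt F2 (1 - h) 1 + (RInt F1 0 h + RInt F2 0 (1 - h)) =
     RInt F1 0 1 + RInt F2 0 1).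
  { rewrite <- (RInt_ChaslesR F1 0 h 1) by auto. rewrite <- (RInt_ChaslesR F2 0 (1 - h) 1) by auto. rg. }
  rewrite E4. rewrite <- RInt_plusR by auto.
  rewrite <- RInt_scalR by (intros; apply cM; [auto| apply cs_cont]).
  apply RInt_ext. intros x _. unfold F1, F2, cs, c.
  replace (INR k * PI * (x - h)) with (INR k * PI * x - INR k * PI * h) by ring.
  replace (INR k * PI * (x + h)) with (INR k * PI * x + INR k * PI * h) by ring.
  rewrite cos_minus, cos_plus. rg.
Qed.



Definition rr (x : R) := 1 - Rabs (1 - Rabs x).

Lemma rr_lip x y : Rabs (rr x - rr y) <= Rabs (x - y).
Proof. unfold rr.
  replace (1 - Rabs (1 - Rabs x) - (1 - Rabs (1 - Rabs y))) with (Rabs (1 - Rabs y) - Rabs (1 - Rabs x)) by ring.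
  eapply Rle_trans; [apply Rabs_triang_inv2|].
  replace (1 - Rabs y - (1 - Rabs x)) with (Rabs x - Rabs y) by ring.
  apply Rabs_triang_inv2.
Qed.

Lemma rr_id x : 0 <= x <= 1 -> rr x = x.
Proof. intros H; unfold rr. rewrite (Rabs_right x) by lra. rewrite (Rabs_right (1 - x)) by lra. ring. Qed.

Lemma rr_neg x : rr (- x) = rr x.
Proof. unfold rr; rewrite Rabs_Ropp; auto. Qed.

Lemma rr_2 z : 0 < z < 1 -> rr (2 - z) = z.
Proof. intros H; unfold rr. rewrite (Rabs_right (2 - z)) by lra.
  replace (1 - (2 - z)) with (- (1 - z)) by ring. rewrite Rabs_Ropp, Rabs_right by lra. ring. Qed.

Lemma hol_comp d K g r : 0 <= d -> 0 <= K -> hol d K g ->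
  (forall x y, Rabs (r x - r y) <= Rabs (x - y)) -> hol d K (fun x => g (r x)).
Proof.
  intros Hd HK Hg Hr x y. simpl.
  destruct (Req_dec (r x) (r y)) as [E|E].
  - rewrite E. unfold Rminus; rewrite Rplus_opp_r, Rabs_R0.
    apply Rmult_le_pos; auto. left; apply Rpower_pos.
  - eapply Rle_trans; [apply Hg|]. apply Rmult_le_compat_l; auto.
    apply Rle_Rpower_l; auto. split; auto. apply Rabs_pos_lt. lra.
Qed.

Lemma abs_half a b M : Rabs a <= M -> Rabs b <= M -> Rabs (a / 2 + b / 2) <= M.
Proof. intros Ha Hb. eapply Rle_trans; [apply Rabs_triang|].
  unfold Rdiv; rewrite !Rabs_mult. rewrite Rabs_inv, (Rabs_right 2) by lra. lra. Qed.

Lemma block_est d K g h n : 0 < d -> 0 <= K -> hol d K g -> 0 < h < 1 ->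
  fs (fun i => ((1 - cos (INR (S i) * PI * h)) * RInt (fun x => g x * cs (S i) x) 0 1) ^ 2) n
   <= / 2 * (K * Rpower h d) ^ 2.
Proof.
  intros Hd HK Hg Hh.
  set (G := fun x => g (rr x)).
  assert (HG : hol d K G) by (apply (hol_comp d K g rr); [lra|lra|exact Hg|apply rr_lip]).
  assert (GC : forall x, continuous G x) by (apply (hol_cont d K); auto).
  assert (gC : forall x, continuous g x) by (apply (hol_cont d K); auto).
  set (w := fun x => G x - / 2 * (G (x + h) + G (x - h))).
  assert (wC : forall x, continuous w x).
  { intros x; unfold w. apply cMi; [auto|]. apply cM; [apply cC|]. apply cP.
    - apply (continuous_comp (fun y => y + h) G); [cont|auto].
    - apply (continuous_comp (fun y => y - h) G); [cont|auto]. }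
  assert (Hb := bessel w n wC).
  assert (Hw : forall x, Rabs (w x) <= K * Rpower h d).
  { intros x. unfold w.
    replace (G x - / 2 * (G (x + h) + G (x - h))) with ((G x - G (x + h)) / 2 + (G x - G (x - h)) / 2) by field.
    apply abs_half.
    - eapply Rle_trans; [apply HG|]. replace (x - (x + h)) with (- h) by ring.
      rewrite Rabs_Ropp, (Rabs_right h) by lra. lra.
    - eapply Rle_trans; [apply HG|]. replace (x - (x - h)) with h by ring.
      rewrite (Rabs_right h) by lra. lra. }
  assert (Hint : RInt (fun x => w x ^ 2) 0 1 <= (K * Rpower h d) ^ 2).
  { eapply Rle_trans.
    - apply (RInt_le _ (fun _ => (K * Rpower h d) ^ 2)). lra.
      apply exR; intros; cont. apply exR; intros; cont.
      intros x _. apply pow_maj_Rabs. apply Hw.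
    - rewrite RInt_constR. lra. }
  assert (Hc : forall i, bc w i = (1 - cos (INR (S i) * PI * h)) * RInt (fun x => g x * cs (S i) x) 0 1).
  { intros i. unfold bc, w.
    rewrite (RInt_ext _ (fun x => G x * cs (S i) x - / 2 * ((G (x + h) + G (x - h)) * cs (S i) x))).
    2:{ intros; rg. }
    rewrite RInt_minusR.
    2:{ intros; apply cM; auto; apply cs_cont. }
    2:{ intros; apply cM; [apply cC|]. apply cM; [|apply cs_cont]. apply cP.
        - apply (continuous_comp (fun y => y + h) G); [cont|auto].
        - apply (continuous_comp (fun y => y - h) G); [cont|auto]. }
    rewrite RInt_scalR.
    2:{ intros; apply cM; [|apply cs_cont]. apply cP.
        - apply (continuous_comp (fun y => y + h) G); [cont|auto].
        - apply (continuous_comp (fun y => y - h) G); [cont|auto]. }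
    rewrite shift_id; auto.
    2:{ intros z; unfold G; rewrite rr_neg; auto. }
    2:{ intros z Hz; unfold G; rewrite rr_2; auto. rewrite rr_id; auto; lra. }
    assert (E : RInt (fun x => G x * cs (S i) x) 0 1 = RInt (fun x => g x * cs (S i) x) 0 1).
    { apply RInt_ext. intros x Hx. rewrite Rmin_left, Rmax_right in Hx by lra.
      unfold G; rewrite rr_id; auto; lra. }
    rewrite E. gen_ints; try apply eqR; field. }
  assert (EQ : forall m, fs (fun i => bc w i ^ 2) m =
     fs (fun i => ((1 - cos (INR (S i) * PI * h)) * RInt (fun x => g x * cs (S i) x) 0 1) ^ 2) m).
  { induction m; cbn [fs]; auto. rewrite IHm, Hc. auto. }
  rewrite <- EQ. lra.
Qed.


Lemma fs_ext F G N : (forall i, (i < N)%nat -> F i = G i) -> fs F N = fs G N.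
Proof. induction N; intros H; simpl; auto. rewrite IHN, H; auto. Qed.
Lemma fs_le F G N : (forall i, (i < N)%nat -> F i <= G i) -> fs F N <= fs G N.
Proof. induction N; intros H; simpl; [lra|]. apply Rplus_le_compat; auto. Qed.
Lemma fs_nonneg F N : (forall i, 0 <= F i) -> 0 <= fs F N.
Proof. intros H; induction N; simpl; [lra|]. specialize (H N). lra. Qed.
Lemma fs_scal c F N : fs (fun i => c * F i) N = c * fs F N.
Proof. induction N; simpl; [ring|]. rewrite IHN; ring. Qed.
Lemma fs_plus F G N : fs (fun i => F i + G i) N = fs F N + fs G N.
Proof. induction N; simpl; [ring|]. rewrite IHN; ring. Qed.
Lemma fs_swap (A : nat -> nat -> R) N M :
  fs (fun i => fs (fun j => A i j) M) N = fs (fun j => fs (fun i => A i j) N) M.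
Proof. induction N; simpl.
  - induction M; simpl; auto. rewrite <- IHM; ring.
  - rewrite IHN, <- fs_plus. reflexivity. Qed.
Lemma sum_fs F n : sum_f_R0 F n = fs F (S n).
Proof. induction n; simpl; [ring|]. rewrite IHn. reflexivity. Qed.
Lemma fs_geom q N : q < 1 -> fs (fun j => q ^ j) N = (1 - q ^ N) / (1 - q).
Proof. intros Hq; induction N; simpl. field; lra. rewrite IHN. field. lra. Qed.

Lemma INR_lt_pow2 n : INR n < 2 ^ n.
Proof. induction n. simpl; lra. rewrite S_INR. change (2 ^ S n) with (2 * 2 ^ n). assert (1 <= 2 ^ n) by (apply pow_R1_Rle; lra). lra. Qed.

Lemma weights e2 J k : 0 <= e2 -> (1 <= k)%nat -> INR k < 2 ^ J ->
  Rpower (INR k) e2 <= fs (fun j => Rpower (2 ^ S j) e2 * (1 - cos (INR k * PI * / 2 ^ S j)) ^ 2) J.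
Proof.
  intros He Hk. assert (Hk' : 1 <= INR k) by (apply (le_INR 1); auto).
  induction J; intros HJ.
  - simpl in HJ; lra.
  - cbn [fs]. destruct (Rlt_le_dec (INR k) (2 ^ J)) as [L|L].
    + assert (0 <= Rpower (2 ^ S J) e2 * (1 - cos (INR k * PI * / 2 ^ S J)) ^ 2).
      { apply Rmult_le_pos; [left; apply Rpower_pos| apply pow2_ge_0]. }
      specialize (IHJ L). lra.
    + assert (0 <= fs (fun j => Rpower (2 ^ S j) e2 * (1 - cos (INR k * PI * / 2 ^ S j)) ^ 2) J).
      { apply fs_nonneg. intros; apply Rmult_le_pos; [left; apply Rpower_pos| apply pow2_ge_0]. }
      assert (Hp : 0 < 2 ^ J) by (apply pow_lt; lra).
      assert (HS : 2 ^ S J = 2 * 2 ^ J) by reflexivity.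
      assert (Hc : cos (INR k * PI * / 2 ^ S J) <= 0).
      { set (t := INR k / 2 ^ J).
        assert (Ht : t * 2 ^ J = INR k) by (unfold t; field; lra).
        assert (1 <= t < 2) by (rewrite HS in HJ; nra).
        replace (INR k * PI * / 2 ^ S J) with (t * (PI / 2)) by (rewrite HS, <- Ht; field; lra).
        assert (HP := PI_RGT_0).
        apply cos_le_0; nra. }
      assert (1 <= (1 - cos (INR k * PI * / 2 ^ S J)) ^ 2) by nra.
      assert (Rpower (INR k) e2 <= Rpower (2 ^ S J) e2).
      { apply Rle_Rpower_l; auto. split; lra. }
      assert (0 < Rpower (2 ^ S J) e2) by apply Rpower_pos.
      nra.
Qed.

Lemma Rpower_2pow m c : Rpower (2 ^ m) c = Rpower 2 (c * INR m).
Proof. unfold Rpower. rewrite ln_pow by lra. f_equal; ring. Qed.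
Lemma Rpower_2inv m c : Rpower (/ 2 ^ m) c = Rpower 2 (- (c * INR m)).
Proof. unfold Rpower. rewrite ln_Rinv by (apply pow_lt; lra). rewrite ln_pow by lra. f_equal; ring. Qed.
Lemma Rpower_pow_q q m : Rpower 2 (q * INR m) = Rpower 2 q ^ m.
Proof. rewrite <- Rpower_pow by apply Rpower_pos. rewrite Rpower_mult. reflexivity. Qed.

Definition beta (g : R -> R) (k : nat) := RInt (fun x => g x * cs k x) 0 1.

Lemma dyadic e2 d K g N : 0 <= e2 -> e2 < 2 * d -> 0 < d -> 0 <= K -> hol d K g ->
  fs (fun i => Rpower (INR (S i)) e2 * beta g (S i) ^ 2) N <=
  / 2 * K ^ 2 / (1 - Rpower 2 (e2 - 2 * d)).
Proof.
  intros He Hed Hd HK Hg.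
  set (q := Rpower 2 (e2 - 2 * d)).
  assert (Hq1 : q < 1).
  { unfold q. rewrite <- (Rpower_O 2) by lra. apply Rpower_lt; lra. }
  assert (Hq0 : 0 < q) by apply Rpower_pos.
  set (H := fun j : nat => / 2 ^ S j).
  set (W := fun j : nat => Rpower (2 ^ S j) e2).
  eapply Rle_trans.
  { apply (fs_le _ (fun i => fs (fun j => W j * ((1 - cos (INR (S i) * PI * H j)) * beta g (S i)) ^ 2) N) N).
    intros i Hi.
    rewrite (fs_ext _ (fun j => beta g (S i) ^ 2 * (W j * (1 - cos (INR (S i) * PI * H j)) ^ 2))).
    2:{ intros; ring. }
    rewrite fs_scal. rewrite (Rmult_comm (beta g (S i) ^ 2)). apply Rmult_le_compat_r; [apply pow2_ge_0|].
    apply weights; auto. lia.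
    eapply Rle_lt_trans; [|apply INR_lt_pow2]. apply le_INR; lia. }
  rewrite fs_swap.
  eapply Rle_trans.
  { apply (fs_le _ (fun j => W j * (/ 2 * (K * Rpower (H j) d) ^ 2))).
    intros j Hj. rewrite fs_scal. apply Rmult_le_compat_l; [left; apply Rpower_pos|].
    apply block_est; auto. unfold H.
    assert (1 < 2 ^ S j).
    { simpl. assert (1 <= 2 ^ j) by (apply pow_R1_Rle; lra). lra. }
    split. apply Rinv_0_lt_compat; lra. rewrite <- Rinv_1. apply Rinv_lt_contravar; lra. }
  rewrite (fs_ext _ (fun j => (/ 2 * K ^ 2 * q) * q ^ j)).
  2:{ intros j _. unfold W, H. rewrite Rpower_2pow, Rpower_2inv.
      set (A := Rpower 2 (e2 * INR (S j))). set (B := Rpower 2 (- (d * INR (S j)))).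
      replace (A * (/ 2 * (K * B) ^ 2)) with (/ 2 * K ^ 2 * (A * (B * B))) by ring.
      unfold A, B. rewrite <- !Rpower_plus.
      replace (e2 * INR (S j) + (- (d * INR (S j)) + - (d * INR (S j)))) with ((e2 - 2 * d) * INR (S j)) by ring.
      rewrite Rpower_pow_q. fold q. change (q ^ S j) with (q * q ^ j). ring. }
  rewrite fs_scal, fs_geom by auto.
  assert (0 <= q ^ N) by (apply pow_le; lra).
  assert (0 <= K ^ 2) by apply pow2_ge_0.
  match goal with |- ?L <= _ => replace L with ((/ 2 * K ^ 2 * q * (1 - q ^ N)) * / (1 - q)) by (field; lra) end.
  unfold Rdiv. apply Rmult_le_compat_r. left; apply Rinv_0_lt_compat; lra.
  assert (q * (1 - q ^ N) <= 1) by nra.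
  assert (0 <= / 2 * K ^ 2) by nra.
  replace (/ 2 * K ^ 2 * q * (1 - q ^ N)) with ((/ 2 * K ^ 2) * (q * (1 - q ^ N))) by ring.
  rewrite <- (Rmult_1_r (/ 2 * K ^ 2)) at 2. apply Rmult_le_compat_l; lra.
Qed.


Lemma ek'_eq k x : ek' k x = sqrt 2 * (INR k * PI) * cs k x.
Proof. reflexivity. Qed.

Lemma coef_eq g k : (forall x, continuous g x) ->
  RInt (fun x => g x * ek' k x) 0 1 = sqrt 2 * (INR k * PI) * beta g k.
Proof. intros Hg. unfold beta.
  rewrite <- RInt_scalR by (intros; apply cM; auto; apply cs_cont).
  apply RInt_ext; intros; rewrite ek'_eq. apply eqR; ring. Qed.

Lemma Hterm_eq alpha g m : (forall x, continuous g x) ->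
  Hterm (- (alpha / 2)) (fun k => - RInt (fun x => g x * ek' k x) 0 1) m =
  2 * Rpower PI (2 - alpha) * (Rpower (INR (S m)) (2 - alpha) * beta g (S m) ^ 2).
Proof.
  intros Hg. unfold Hterm. rewrite coef_eq by auto. unfold lam.
  assert (Hx : 0 < INR (S m) * PI) by (apply Rmult_lt_0_compat; [apply lt_0_INR; lia| apply PI_RGT_0]).
  set (x := INR (S m) * PI) in *.
  assert (E2 : x ^ 2 = Rpower x 2).
  { rewrite <- Rpower_pow by auto. f_equal. }
  replace ((- (sqrt 2 * x * beta g (S m))) ^ 2) with (sqrt 2 ^ 2 * x ^ 2 * beta g (S m) ^ 2) by ring.
  rewrite pow2_sqrt by lra.
  rewrite E2, Rpower_mult.
  assert (E3 : Rpower x (2 * - (alpha / 2)) * Rpower x 2 = Rpower x (2 - alpha)).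
  { rewrite <- Rpower_plus. replace (2 * - (alpha / 2) + 2) with (2 - alpha) by field. reflexivity. }
  assert (E4 : Rpower x (2 - alpha) = Rpower (INR (S m)) (2 - alpha) * Rpower PI (2 - alpha)).
  { unfold x. rewrite Rpower_mult_distr; auto. apply lt_0_INR; lia. apply PI_RGT_0. }
  transitivity (2 * (Rpower x (2 * - (alpha / 2)) * Rpower x 2) * beta g (S m) ^ 2).
  - ring.
  - rewrite E3, E4. ring.
Qed.

Lemma key alpha d : 1 < alpha <= 2 -> 1 - alpha / 2 < d < 1 ->
  exists C0, 0 <= C0 /\ forall g K, 0 <= K -> hol d K g ->
   (forall k, ex_RInt (fun x => g x * ek' k x) 0 1) /\
   (forall m, 0 <= Hterm (- (alpha / 2)) (fun k => - RInt (fun x => g x * ek' k x) 0 1) m) /\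
   (forall N, sum_f_R0 (Hterm (- (alpha / 2)) (fun k => - RInt (fun x => g x * ek' k x) 0 1)) N <= C0 * K ^ 2).
Proof.
  intros Ha Hd.
  set (q := Rpower 2 (2 - alpha - 2 * d)).
  assert (Hq1 : q < 1).
  { unfold q. rewrite <- (Rpower_O 2) by lra. apply Rpower_lt; lra. }
  exists (Rpower PI (2 - alpha) / (1 - q)). split.
  { unfold Rdiv. apply Rmult_le_pos. left; apply Rpower_pos. left; apply Rinv_0_lt_compat; lra. }
  intros g K HK Hg.
  assert (gC : forall x, continuous g x) by (apply (hol_cont d K); auto; lra).
  split; [|split].
  - intros k. apply exR. intros x. unfold ek'. cont.
  - intros m. rewrite Hterm_eq by auto.
    apply Rmult_le_pos. apply Rmult_le_pos; [lra| left; apply Rpower_pos].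
    apply Rmult_le_pos; [left; apply Rpower_pos| apply pow2_ge_0].
  - intros N. rewrite sum_fs.
    rewrite (fs_ext _ (fun m => 2 * Rpower PI (2 - alpha) * (Rpower (INR (S m)) (2 - alpha) * beta g (S m) ^ 2)))
      by (intros; apply Hterm_eq; auto).
    rewrite fs_scal.
    assert (Hdy := dyadic (2 - alpha) d K g (S N) ltac:(lra) ltac:(lra) ltac:(lra) HK Hg).
    fold q in Hdy.
    assert (0 < Rpower PI (2 - alpha)) by apply Rpower_pos.
    apply Rmult_le_compat_l with (r := 2 * Rpower PI (2 - alpha)) in Hdy; [|lra].
    eapply Rle_trans; [exact Hdy|]. right. field. lra.
Qed.


Definition Lip (F : R -> R) R0 L := forall x y, Rabs x <= R0 -> Rabs y <= R0 ->
  Rabs (F x - F y) <= L * Rabs (x - y).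
Definition P4 (F : R -> R) R0 K := forall p1 q1 p2 q2, Rabs p1 <= R0 -> Rabs q1 <= R0 ->
  Rabs p2 <= R0 -> Rabs q2 <= R0 ->
  Rabs ((F p1 - F q1) - (F p2 - F q2)) <=
  K * (Rabs ((p1 - q1) - (p2 - q2)) + Rabs (p2 - q2) * (Rabs (p1 - p2) + Rabs (q1 - q2))).

Lemma pow_bound y i R0 : Rabs y <= R0 -> Rabs (y ^ i) <= R0 ^ i.
Proof. intros H. rewrite <- RPow_abs. apply pow_incr. split; auto. apply Rabs_pos. Qed.

Lemma mono_lip R0 i : 0 <= R0 -> exists L, 0 <= L /\ Lip (fun x => x ^ i) R0 L.
Proof.
  intros HR. induction i.
  - exists 0. split; [lra|]. intros x y _ _. simpl. unfold Rminus; rewrite Rplus_opp_r, Rabs_R0. lra.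
  - destruct IHi as [L [HL HLip]].
    assert (0 <= R0 ^ i) by (apply pow_le; auto).
    exists (R0 * L + R0 ^ i). split; [nra|].
    intros x y Hx Hy. simpl.
    replace (x * x ^ i - y * y ^ i) with (x * (x ^ i - y ^ i) + (x - y) * y ^ i) by ring.
    eapply Rle_trans; [apply Rabs_triang|]. rewrite !Rabs_mult.
    assert (H1 := HLip x y Hx Hy). assert (H2 := pow_bound y i R0 Hy).
    assert (0 <= Rabs (x - y)) by apply Rabs_pos.
    assert (0 <= Rabs (x ^ i - y ^ i)) by apply Rabs_pos.
    assert (0 <= Rabs x) by apply Rabs_pos.
    assert (Rabs x * Rabs (x ^ i - y ^ i) <= R0 * (L * Rabs (x - y))).
    { apply Rmult_le_compat; auto. }
    assert (Rabs (x - y) * Rabs (y ^ i) <= Rabs (x - y) * R0 ^ i).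
    { apply Rmult_le_compat_l; auto. }
    nra.
Qed.

Lemma mono_p4 R0 i : 0 <= R0 -> exists K, 0 <= K /\ P4 (fun x => x ^ i) R0 K.
Proof.
  intros HR. induction i.
  - exists 0. split; [lra|]. intros p1 q1 p2 q2 _ _ _ _. simpl.
    match goal with |- Rabs ?t <= _ => replace t with 0 by ring end. rewrite Rabs_R0.
    lra.
  - destruct IHi as [K [HK HP]]. destruct (mono_lip R0 i HR) as [L [HL HLip]].
    assert (0 <= R0 ^ i) by (apply pow_le; auto).
    exists (R0 * K + 2 * L + R0 ^ i). split; [nra|].
    intros a b c d Ha Hb Hc Hd. simpl.
    set (E := Rabs ((a - b) - (c - d)) + Rabs (c - d) * (Rabs (a - c) + Rabs (b - d))).
    set (D := (a ^ i - b ^ i) - (c ^ i - d ^ i)).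
    replace (a * a ^ i - b * b ^ i - (c * c ^ i - d * d ^ i)) with
      (a * D + (a - c) * (c ^ i - d ^ i) + ((a - b) - (c - d)) * b ^ i + (c - d) * (b ^ i - d ^ i))
      by (unfold D; ring).
    assert (P1 : Rabs (a * D) <= R0 * K * E).
    { rewrite Rabs_mult. assert (HD := HP a b c d Ha Hb Hc Hd). fold D E in HD.
      assert (0 <= Rabs D) by apply Rabs_pos. assert (0 <= Rabs a) by apply Rabs_pos.
      rewrite Rmult_assoc. apply Rmult_le_compat; auto. }
    assert (HE1 : 0 <= Rabs (c - d)) by apply Rabs_pos.
    assert (HE2 : 0 <= Rabs (a - c)) by apply Rabs_pos.
    assert (HE3 : 0 <= Rabs (b - d)) by apply Rabs_pos.
    assert (HE4 : 0 <= Rabs ((a - b) - (c - d))) by apply Rabs_pos.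
    assert (P2 : Rabs ((a - c) * (c ^ i - d ^ i)) <= L * E).
    { rewrite Rabs_mult. assert (Hl := HLip c d Hc Hd).
      assert (Rabs (a - c) * Rabs (c ^ i - d ^ i) <= Rabs (a - c) * (L * Rabs (c - d))).
      { apply Rmult_le_compat_l; auto. }
      eapply Rle_trans; [eassumption|].
      replace (Rabs (a - c) * (L * Rabs (c - d))) with (L * (Rabs (c - d) * Rabs (a - c))) by ring.
      apply Rmult_le_compat_l; auto. unfold E.
      assert (0 <= Rabs (c - d) * Rabs (b - d)) by (apply Rmult_le_pos; auto). lra. }
    assert (P3 : Rabs (((a - b) - (c - d)) * b ^ i) <= R0 ^ i * E).
    { rewrite Rabs_mult. assert (Hpb := pow_bound b i R0 Hb).
      assert (Rabs ((a - b) - (c - d)) * Rabs (b ^ i) <= Rabs ((a - b) - (c - d)) * R0 ^ i).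
      { apply Rmult_le_compat_l; auto. }
      eapply Rle_trans; [eassumption|].
      rewrite Rmult_comm. apply Rmult_le_compat_l; auto. unfold E.
      assert (0 <= Rabs (c - d) * (Rabs (a - c) + Rabs (b - d))) by (apply Rmult_le_pos; lra). lra. }
    assert (P5 : Rabs ((c - d) * (b ^ i - d ^ i)) <= L * E).
    { rewrite Rabs_mult. assert (Hl2 := HLip b d Hb Hd).
      assert (Rabs (c - d) * Rabs (b ^ i - d ^ i) <= Rabs (c - d) * (L * Rabs (b - d))).
      { apply Rmult_le_compat_l; auto. }
      eapply Rle_trans; [eassumption|].
      replace (Rabs (c - d) * (L * Rabs (b - d))) with (L * (Rabs (c - d) * Rabs (b - d))) by ring.
      apply Rmult_le_compat_l; auto. unfold E.
      assert (0 <= Rabs (c - d) * Rabs (a - c)) by (apply Rmult_le_pos; auto). lra. }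
    eapply Rle_trans; [apply Rabs_triang|].
    eapply Rle_trans; [apply Rplus_le_compat_r; apply Rabs_triang|].
    eapply Rle_trans; [apply Rplus_le_compat_r; apply Rplus_le_compat_r; apply Rabs_triang|].
    fold E. nra.
Qed.

Lemma polyR_S a n x : polyR a (S n) x = polyR a n x + a (S n) * x ^ S n.
Proof. reflexivity. Qed.

Lemma poly_p4 a n R0 : 0 <= R0 -> exists K, 0 <= K /\ P4 (polyR a n) R0 K.
Proof.
  intros HR. induction n.
  - destruct (mono_p4 R0 0 HR) as [K [HK HP]].
    exists (Rabs (a 0%nat) * K). split. apply Rmult_le_pos; auto; apply Rabs_pos.
    intros p1 q1 p2 q2 H1 H2 H3 H4. unfold polyR; simpl.
    match goal with |- Rabs ?t <= _ => replace t with 0 by ring end.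
    rewrite Rabs_R0. apply Rmult_le_pos; [apply Rmult_le_pos; auto; apply Rabs_pos|].
    assert (0 <= Rabs (p2 - q2)) by apply Rabs_pos. assert (0 <= Rabs (p1 - p2)) by apply Rabs_pos.
    assert (0 <= Rabs (q1 - q2)) by apply Rabs_pos. assert (0 <= Rabs (p1 - q1 - (p2 - q2))) by apply Rabs_pos.
    nra.
  - destruct IHn as [K1 [HK1 HP1]]. destruct (mono_p4 R0 (S n) HR) as [K2 [HK2 HP2]].
    exists (K1 + Rabs (a (S n)) * K2). split. assert (0 <= Rabs (a (S n))) by apply Rabs_pos. nra.
    intros p1 q1 p2 q2 H1 H2 H3 H4. rewrite !polyR_S.
    replace (polyR a n p1 + a (S n) * p1 ^ S n - (polyR a n q1 + a (S n) * q1 ^ S n) -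
      (polyR a n p2 + a (S n) * p2 ^ S n - (polyR a n q2 + a (S n) * q2 ^ S n))) with
      ((polyR a n p1 - polyR a n q1 - (polyR a n p2 - polyR a n q2)) +
       a (S n) * (p1 ^ S n - q1 ^ S n - (p2 ^ S n - q2 ^ S n))) by ring.
    eapply Rle_trans; [apply Rabs_triang|]. rewrite Rabs_mult.
    assert (A1 := HP1 p1 q1 p2 q2 H1 H2 H3 H4).
    assert (A2 := HP2 p1 q1 p2 q2 H1 H2 H3 H4). simpl in A2.
    assert (0 <= Rabs (a (S n))) by apply Rabs_pos.
    assert (Rabs (a (S n)) * Rabs (p1 * p1 ^ n - q1 * q1 ^ n - (p2 * p2 ^ n - q2 * q2 ^ n)) <=
            Rabs (a (S n)) * (K2 * (Rabs (p1 - q1 - (p2 - q2)) + Rabs (p2 - q2) * (Rabs (p1 - p2) + Rabs (q1 - q2))))).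
    { apply Rmult_le_compat_l; auto. }
    simpl. lra.
Qed.


Definition clamp (x : R) := Rmax 0 (Rmin 1 x).

Lemma clamp_in x : 0 <= clamp x <= 1.
Proof. unfold clamp, Rmax, Rmin. repeat destruct Rle_dec; lra. Qed.
Lemma clamp_id x : 0 <= x <= 1 -> clamp x = x.
Proof. intros H. unfold clamp, Rmax, Rmin. repeat destruct Rle_dec; lra. Qed.
Lemma clamp_lip x y : Rabs (clamp x - clamp y) <= Rabs (x - y).
Proof. unfold clamp, Rmax, Rmin, Rabs. repeat destruct Rle_dec; repeat destruct Rcase_abs; lra. Qed.

Lemma hb d u A B : 0 < d -> holder_bounds d u A B ->
  0 <= A /\ 0 <= B /\ (forall x, Rabs (u (clamp x)) <= A) /\ hol d B (fun x => u (clamp x)).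
Proof.
  intros Hd [H1 H2].
  assert (HA : 0 <= A) by (eapply Rle_trans; [apply Rabs_pos| apply (H1 0); lra]).
  assert (HB : 0 <= B).
  { assert (H := H2 0 1 ltac:(lra) ltac:(lra) ltac:(lra)).
    replace (Rabs (0 - 1)) with 1 in H by (rewrite Rabs_minus_sym, Rabs_right; lra).
    rewrite Rpower_1l, Rmult_1_r in H. eapply Rle_trans; [apply Rabs_pos|exact H]. }
  split; [auto|split; [auto|split]].
  - intros x. apply H1. apply clamp_in.
  - intros x y. destruct (Req_dec (clamp x) (clamp y)) as [E|E].
    + rewrite E. unfold Rminus; rewrite !Rplus_opp_r, Rabs_R0. apply Rmult_le_pos; auto; left; apply Rpower_pos.
    + eapply Rle_trans; [apply H2; auto; apply clamp_in|].
      apply Rmult_le_compat_l; auto. apply Rle_Rpower_l; [lra|]. split; [|apply clamp_lip].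
      apply Rabs_pos_lt; lra.
Qed.

Lemma g_hol d a n K R0 u v Au Bu Av Bv A B : 0 < d -> 0 <= K -> P4 (polyR a n) R0 K ->
  holder_bounds d u Au Bu -> Au + Bu <= R0 ->
  holder_bounds d v Av Bv -> Av + Bv <= R0 ->
  holder_bounds d (fun x => u x - v x) A B ->
  0 <= A /\ 0 <= B /\
  hol d (K * (1 + 2 * R0) * (A + B)) (fun x => polyR a n (u (clamp x)) - polyR a n (v (clamp x))).
Proof.
  intros Hd HK HP Hu HuR Hv HvR Hw.
  destruct (hb d u Au Bu Hd Hu) as [HAu [HBu [Hu1 Hu2]]].
  destruct (hb d v Av Bv Hd Hv) as [HAv [HBv [Hv1 Hv2]]].
  destruct (hb d _ A B Hd Hw) as [HA [HB [Hw1 Hw2]]].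
  split; [auto|split; [auto|]].
  intros x y.
  set (P := Rpower (Rabs (x - y)) d).
  assert (HPp : 0 < P) by apply Rpower_pos.
  assert (R1 : Rabs (u (clamp x)) <= R0) by (specialize (Hu1 x); lra).
  assert (R2 : Rabs (v (clamp x)) <= R0) by (specialize (Hv1 x); lra).
  assert (R3 : Rabs (u (clamp y)) <= R0) by (specialize (Hu1 y); lra).
  assert (R4 : Rabs (v (clamp y)) <= R0) by (specialize (Hv1 y); lra).
  eapply Rle_trans; [apply (HP _ _ _ _ R1 R2 R3 R4)|].
  assert (E1 := Hw2 x y). simpl in E1. fold P in E1.
  assert (E2 := Hw1 y). simpl in E2.
  assert (E3 := Hu2 x y). simpl in E3. fold P in E3.
  assert (E4 := Hv2 x y). simpl in E4. fold P in E4.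
  set (X1 := Rabs (u (clamp x) - v (clamp x) - (u (clamp y) - v (clamp y)))) in *.
  set (X2 := Rabs (u (clamp y) - v (clamp y))) in *.
  set (X3 := Rabs (u (clamp x) - u (clamp y))) in *.
  set (X4 := Rabs (v (clamp x) - v (clamp y))) in *.
  assert (0 <= X2) by apply Rabs_pos.
  assert (Bu <= R0) by lra. assert (Bv <= R0) by lra.
  assert (Bu * P <= R0 * P) by (apply Rmult_le_compat_r; lra).
  assert (Bv * P <= R0 * P) by (apply Rmult_le_compat_r; lra).
  assert (X3 + X4 <= 2 * R0 * P) by lra.
  assert (X2 * (X3 + X4) <= A * (2 * R0 * P)).
  { apply Rmult_le_compat; auto. assert (0 <= X3) by apply Rabs_pos. assert (0 <= X4) by apply Rabs_pos. lra. }
  assert (X1 + X2 * (X3 + X4) <= (1 + 2 * R0) * (A + B) * P).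
  { assert (0 <= R0) by lra.
    assert (A * (2 * R0 * P) <= (2 * R0) * (A + B) * P).
    { replace (A * (2 * R0 * P)) with ((2 * R0) * A * P) by ring.
      apply Rmult_le_compat_r; [lra|]. apply Rmult_le_compat_l; lra. }
    assert (B * P <= (A + B) * P) by (apply Rmult_le_compat_r; lra).
    lra. }
  replace (K * (1 + 2 * R0) * (A + B) * P) with (K * ((1 + 2 * R0) * (A + B) * P)) by ring.
  apply Rmult_le_compat_l; auto.
Qed.

Lemma Rint_link f : ex_RInt f 0 1 -> Rint f 0 1 = RInt f 0 1.
Proof.
  intros H. unfold Rint.
  destruct (excluded_middle_informative _) as [e|n0].
  - destruct (constructive_indefinite_description _ e) as [pr _].
    symmetry; apply RInt_Reals.
  - exfalso; apply n0. exists (ex_RInt_Reals_0 _ _ _ H). auto.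
Qed.

Lemma lim_le F S b : infinite_sum F S -> (forall N, sum_f_R0 F N <= b) -> S <= b.
Proof.
  intros HS Hb. destruct (Rle_dec S b) as [|Hn]; auto. exfalso.
  destruct (HS (S - b) ltac:(lra)) as [N HN].
  specialize (HN N (Nat.le_refl N)). specialize (Hb N).
  unfold Rdist in HN. apply Rabs_def2 in HN. lra.
Qed.


Lemma hb_zero d : holder_bounds d (fun _ => 0) 0 0.
Proof. split.
  - intros; rewrite Rabs_R0; lra.
  - intros; unfold Rminus; rewrite Rplus_opp_r, Rabs_R0; lra. Qed.

Lemma hb_sub0 d u A B : holder_bounds d u A B -> holder_bounds d (fun x => u x - 0) A B.
Proof. intros [H1 H2]; split; intros.
  - rewrite Rminus_0_r; auto.
  - replace (u x - 0 - (u y - 0)) with (u x - u y) by ring. auto. Qed.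

Lemma single d a n u Au Bu : 0 < d -> holder_bounds d u Au Bu ->
  exists Kg, 0 <= Kg /\ hol d Kg (fun x => polyR a n (u (clamp x))).
Proof.
  intros Hd Hu. destruct (hb d u Au Bu Hd Hu) as [HA [HB _]].
  destruct (poly_p4 a n (Au + Bu) ltac:(lra)) as [K [HK HP]].
  destruct (g_hol d a n K (Au + Bu) u (fun _ => 0) Au Bu 0 0 Au Bu Hd HK HP Hu ltac:(lra) (hb_zero d) ltac:(lra)
    (hb_sub0 d u Au Bu Hu)) as [_ [_ H]].
  exists (K * (1 + 2 * (Au + Bu)) * (Au + Bu)). split.
  - apply Rmult_le_pos; [apply Rmult_le_pos|]; lra.
  - intros x y. specialize (H x y). simpl in H.
    replace (polyR a n (u (clamp x)) - polyR a n (u (clamp y))) with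
      (polyR a n (u (clamp x)) - polyR a n 0 - (polyR a n (u (clamp y)) - polyR a n 0)) by ring.
    auto.
Qed.

Lemma Fcoef_eq a n u : (forall x, continuous (fun x => polyR a n (u (clamp x))) x) ->
  forall k, Fcoef a n u k = - RInt (fun x => polyR a n (u (clamp x)) * ek' k x) 0 1 /\
            ex_RInt (fun x => polyR a n (u x) * ek' k x) 0 1.
Proof.
  intros Hc k.
  assert (Ex : ex_RInt (fun x => polyR a n (u (clamp x)) * ek' k x) 0 1).
  { apply exR. intros x. apply cM; auto. unfold ek'. cont. }
  assert (Ex2 : ex_RInt (fun x => polyR a n (u x) * ek' k x) 0 1).
  { apply (ex_RInt_ext (fun x => polyR a n (u (clamp x)) * ek' k x)); auto.
    intros x Hx. rewrite Rmin_left, Rmax_right in Hx by lra. rewrite clamp_id; auto; lra. }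
  split; auto.
  unfold Fcoef. rewrite Rint_link by auto. f_equal.
  apply RInt_ext. intros x Hx. rewrite Rmin_left, Rmax_right in Hx by lra. rewrite clamp_id; auto; lra.
Qed.

Theorem mainTheorem9 (alpha delta : R) (a : nat -> R) (n : nat) :
  1 < alpha <= 2 ->
  1 - alpha / 2 < delta < 1 ->
  (forall u : R -> R, in_Cdelta delta u ->
     (forall k : nat, (1 <= k)%nat ->
        inhabited (Riemann_integrable (fun x => polyR a n (u x) * ek' k x) 0 1)) /\
     exists S : R, infinite_sum (Hterm (- (alpha / 2)) (Fcoef a n u)) S) /\
  (forall R0 : R, 0 < R0 -> exists C : R, 0 < C /\
     forall (u v : R -> R) (Au Bu Av Bv : R),
       holder_bounds delta u Au Bu -> Au + Bu <= R0 ->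
       holder_bounds delta v Av Bv -> Av + Bv <= R0 ->
       forall S : R,
         infinite_sum (Hterm (- (alpha / 2)) (fun k => Fcoef a n u k - Fcoef a n v k)) S ->
         forall A B : R, holder_bounds delta (fun x => u x - v x) A B ->
           sqrt S <= C * (A + B)).
Proof.
  intros Ha Hd.
  assert (Hd0 : 0 < delta) by lra.
  destruct (key alpha delta Ha Hd) as [C0 [HC0 Hkey]].
  split.
  - intros u [Au [Bu Hu]].
    destruct (single delta a n u Au Bu Hd0 Hu) as [Kg [HKg Hg]].
    assert (Hc : forall x, continuous (fun x => polyR a n (u (clamp x))) x) by (apply (hol_cont delta Kg); auto).
    destruct (Hkey _ Kg HKg Hg) as [_ [Hpos Hbd]].
    split.
    + intros k _. constructor. apply ex_RInt_Reals_0. apply (Fcoef_eq a n u Hc k).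
    + assert (Eq : Fcoef a n u = fun k => - RInt (fun x => polyR a n (u (clamp x)) * ek' k x) 0 1).
      { apply functional_extensionality. intros k. apply (Fcoef_eq a n u Hc k). }
      rewrite Eq.
      set (T := Hterm (- (alpha / 2)) (fun k => - RInt (fun x => polyR a n (u (clamp x)) * ek' k x) 0 1)) in *.
      destruct (growing_cv (fun N => sum_f_R0 T N)) as [l Hl].
      * intros N. simpl. specialize (Hpos (S N)). lra.
      * exists (C0 * Kg ^ 2). intros y [N ->]. apply Hbd.
      * exists l. exact Hl.
  - intros R0 HR0.
    destruct (poly_p4 a n R0 ltac:(lra)) as [K [HK HP]].
    exists (sqrt C0 * (K * (1 + 2 * R0)) + 1). split.
    { assert (0 <= sqrt C0) by apply sqrt_pos. assert (0 <= K * (1 + 2 * R0)) by (apply Rmult_le_pos; lra). assert (0 <= sqrt C0 * (K * (1 + 2 * R0))) by (apply Rmult_le_pos; lra). lra. }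
    intros u v Au Bu Av Bv Hu HuR Hv HvR S HS A B Hw.
    destruct (g_hol delta a n K R0 u v Au Bu Av Bv A B Hd0 HK HP Hu HuR Hv HvR Hw) as [HA [HB Hg]].
    set (Kg := K * (1 + 2 * R0) * (A + B)) in *.
    assert (HK1 : 0 <= K * (1 + 2 * R0)) by (apply Rmult_le_pos; lra).
    assert (HKg : 0 <= Kg) by (unfold Kg; apply Rmult_le_pos; [exact HK1|]; lra).
    destruct (Hkey _ Kg HKg Hg) as [_ [_ Hbd]].
    destruct (single delta a n u Au Bu Hd0 Hu) as [Ku [HKu Hgu]].
    destruct (single delta a n v Av Bv Hd0 Hv) as [Kv [HKv Hgv]].
    assert (Hcu : forall x, continuous (fun x => polyR a n (u (clamp x))) x) by (apply (hol_cont delta Ku); auto).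
    assert (Hcv : forall x, continuous (fun x => polyR a n (v (clamp x))) x) by (apply (hol_cont delta Kv); auto).
    assert (Eq : (fun k => Fcoef a n u k - Fcoef a n v k) =
      fun k => - RInt (fun x => (polyR a n (u (clamp x)) - polyR a n (v (clamp x))) * ek' k x) 0 1).
    { apply functional_extensionality. intros k.
      rewrite (proj1 (Fcoef_eq a n u Hcu k)), (proj1 (Fcoef_eq a n v Hcv k)).
      rewrite (RInt_ext (fun x => (polyR a n (u (clamp x)) - polyR a n (v (clamp x))) * ek' k x) (fun x => polyR a n (u (clamp x)) * ek' k x - polyR a n (v (clamp x)) * ek' k x)).
      2:{ intros. apply eqR; ring. }
      rewrite RInt_minusR.
      - apply eqR; ring.
      - intros; apply cM; auto; unfold ek'; cont.
      - intros; apply cM; auto; unfold ek'; cont. }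
    rewrite Eq in HS.
    assert (HSb := lim_le _ _ _ HS Hbd).
    assert (0 <= sqrt C0) by apply sqrt_pos.
    eapply Rle_trans; [apply sqrt_le_1_alt; exact HSb|].
    rewrite sqrt_mult by (auto; apply pow2_ge_0).
    rewrite sqrt_pow2 by auto.
    unfold Kg.
    replace (sqrt C0 * (K * (1 + 2 * R0) * (A + B))) with ((sqrt C0 * (K * (1 + 2 * R0))) * (A + B)) by ring.
    apply Rmult_le_compat_r; lra.
Qed.
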